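(* Let $w\in\mathcal S_n$ and $a,b\in\mathrm R(w)$. Then $a$ and $b$ lie in the same commutation class if and only if $\Gamma(a,(x,y,z))=\Gamma(b,(x,y,z))$ for every triple $(x,y,z)\in\mathrm T_w$.
   Context: Permutations are in one-line notation. A word $a=a_1\cdots a_\ell$ with letters in $\{1,\dots,n-1\}$ acts on a word of length $n$ by successively swapping the entries in positions $a_j$ and $a_j+1$, $j=1,\dots,\ell$. $\mathrm R(w)$ is the set of reduced words of $w$ (words of length $\ell(w)$, the number of inversions of $w$, whose action on $12\cdots n$ yields $w$). For $a\in\mathrm R(w)$, each inversion $(p,q)$ of $w$ (values $p>q$ with $p$ left of $q$ in $w$) is created by exactly one step, and $P_a(p,q)$ denotes the index of that step. Two reduced words differ by a commutation if one is obtained from the other by replacing a factor $ij$ with $|i-j|\ge2$ by $ji$; the commutation class $[a]$ is the set of reduced words reachable from $a$ by sequences of commutations. $\mathrm T_w$ is the set of triples of values $(x,y,z)$ with $x<y<z$ such that $z,y,x$ appear in this order from left to right in $w$. For $a\in\mathrm R(w)$ and $(x,y,z)\in\mathrm T_w$, $\Gamma(a,(x,y,z))=1$ if $P_a(y,x)>P_a(z,y)$ and $\Gamma(a,(x,y,z))=0$ if $P_a(y,x)<P_a(z,y)$. *)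

(* Defs.v *)
From Stdlib Require Import Relations.
From mathcomp Require Import all_boot all_order all_fingroup.
Set Implicit Arguments. Unset Strict Implicit. Unset Printing Implicit Defensive.

(* One-line notation of w : 'S_n, with values 1..n (w maps 'I_n to 'I_n,
   value of position i is (w i).+1). *)
Definition oneline n (w : 'S_n) : seq nat := [seq (w i).+1 | i <- enum 'I_n].

Definition idword (n : nat) : seq nat := iota 1 n.

(* Swap the entries in (1-indexed) positions k and k+1. *)
Definition swap_at (s : seq nat) (k : nat) : seq nat :=
  [seq if i == k.-1 then nth 0 s k
       else if i == k then nth 0 s k.-1
       else nth 0 s i | i <- iota 0 (size s)].

Definition act (a : seq nat) (s : seq nat) : seq nat := foldl swap_at s a.

Definition ninv (s : seq nat) : nat :=
  \sum_(i < size s) \sum_(j < size s | i < j) (nth 0 s j < nth 0 s i).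

Definition reduced n (w : 'S_n) (a : seq nat) : bool :=
  [&& all (fun k => (0 < k) && (k < n)) a,
      size a == ninv (oneline w)
    & act a (idword n) == oneline w].

(* Step j+1 (0-indexed j) of a creates the inversion (p,q), p > q:
   before the step, q is at position a_(j+1) and p at position a_(j+1)+1. *)
Definition creates n (a : seq nat) (p q : nat) (j : nat) : bool :=
  let t := act (take j a) (idword n) in
  let k := nth 0 a j in
  (nth 0 t k.-1 == q) && (nth 0 t k == p).

(* P_a(p,q): the (1-indexed) index of the step creating the inversion (p,q). *)
Definition Pidx n (a : seq nat) (p q : nat) : nat :=
  (find (creates n a p q) (iota 0 (size a))).+1.

Definition inT n (w : 'S_n) (x y z : nat) : bool :=
  let s := oneline w in
  [&& x < y, y < z, x \in s, y \in s, z \in s,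
      index z s < index y s & index y s < index x s].

Definition Gamma n (a : seq nat) (x y z : nat) : nat :=
  (Pidx n a z y < Pidx n a y x : bool).

Definition comm_step (a b : seq nat) : Prop :=
  exists (u v : seq nat) (i j : nat),
    [|| i.+1 < j | j.+1 < i] /\ a = u ++ [:: i; j] ++ v /\ b = u ++ [:: j; i] ++ v.

Definition same_comm_class (a b : seq nat) : Prop :=
  clos_refl_trans (seq nat) comm_step a b.

(* Main.v *)
Require Import Defs.
From Stdlib Require Import Relations.
From mathcomp Require Import all_boot all_order all_fingroup.
From mathcomp Require Import zify.
Set Implicit Arguments. Unset Strict Implicit. Unset Printing Implicit Defensive.
Local Notation act := Defs.act.

Lemma size_swap s k : size (swap_at s k) = size s.
Proof. by rewrite /swap_at size_map size_iota. Qed.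

Lemma nth_swap s k i : i < size s ->
  nth 0 (swap_at s k) i = if i == k.-1 then nth 0 s k
       else if i == k then nth 0 s k.-1 else nth 0 s i.
Proof. by move=> hi; rewrite /swap_at (nth_map 0) ?size_iota // nth_iota. Qed.

Lemma swap_cat s k : 0 < k < size s ->
  swap_at s k = take k.-1 s ++ nth 0 s k :: nth 0 s k.-1 :: drop k.+1 s.
Proof.
move=> /andP[k0 ks]; apply: (@eq_from_nth _ 0).
  rewrite size_swap size_cat /= size_take size_drop; case: ifP; lia.
move=> i; rewrite size_swap => hi; rewrite nth_swap // nth_cat size_take.
have -> : (k.-1 < size s) = true by lia.
case: (ltnP i k.-1) => h1.
  rewrite nth_take //; case: eqP; [lia|]; case: eqP; lia.
case: (eqVneq i k.-1) => [->|h2]; first by rewrite subnn.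
have h3 : i - k.-1 = (i - k.-1 - 1).+1 by lia.
rewrite h3 /=.
case: (eqVneq i k) => [->|h4].
  by have -> : k - k.-1 - 1 = 0 by lia.
have h5 : i - k.-1 - 1 = (i - k.-1 - 2).+1 by lia.
by rewrite h5 /= nth_drop; congr nth; lia.
Qed.

Lemma split_at s k : 0 < k < size s ->
  s = take k.-1 s ++ nth 0 s k.-1 :: nth 0 s k :: drop k.+1 s.
Proof.
move=> /andP[k0 ks].
rewrite -{1}(cat_take_drop k.-1 s) (drop_nth 0); last lia.
have -> : k.-1.+1 = k by lia.
by rewrite (drop_nth 0).
Qed.

Lemma perm_swap s k : 0 < k < size s -> perm_eq (swap_at s k) s.
Proof.
move=> hk; rewrite swap_cat // [in X in perm_eq _ X](split_at hk) perm_cat2l.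
by rewrite -(cat1s (nth 0 s k)) -(cat1s (nth 0 s k.-1)) perm_catCA.
Qed.

Fixpoint ninv2 (s : seq nat) : nat :=
  if s is x :: s' then count (fun y => y < x) s' + ninv2 s' else 0.

Lemma sum_count (s : seq nat) x :
  \sum_(i < size s) (nth 0 s i < x) = count (fun y => y < x) s.
Proof.
elim: s => [|y s IH]; first by rewrite big_ord0.
by rewrite big_ord_recl /= IH.
Qed.

Lemma ninvE s : ninv s = ninv2 s.
Proof.
elim: s => [|x s IH]; first by rewrite /ninv big_ord0.
rewrite /ninv /= big_ord_recl /= -IH /ninv -sum_count.
congr addn.
  rewrite big_mkcond /= big_ord_recl /= add0n.
  by apply: eq_bigr => i _.
apply: eq_bigr => i _; rewrite big_mkcond big_ord_recl /= add0n.
rewrite [RHS]big_mkcond; apply: eq_bigr => j _ /=.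
by rewrite /bump /= !add1n ltnS.
Qed.

Lemma ninv2_swap u x y v :
  ninv2 (u ++ x :: y :: v) + (x < y) = ninv2 (u ++ y :: x :: v) + (y < x).
Proof.
elim: u => [|z u IH] /=.
  case: (ltngtP x y) => h /=; lia.
rewrite !count_cat /=; lia.
Qed.

Lemma ninv_swap s k : 0 < k < size s ->
  ninv s + (nth 0 s k.-1 < nth 0 s k) = ninv (swap_at s k) + (nth 0 s k < nth 0 s k.-1).
Proof.
move=> hk; rewrite !ninvE swap_cat // {1}(split_at hk); exact: ninv2_swap.
Qed.

Lemma ninv2_iota m n : ninv2 (iota m n) = 0.
Proof.
elim: n m => [|n IH] m //=; rewrite IH addn0.
apply/eqP; rewrite -leqn0 leqNgt -has_count; apply/hasP => -[y].
rewrite mem_iota; lia.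
Qed.

Lemma act_cat a b s : act (a ++ b) s = act b (act a s).
Proof. by rewrite /act foldl_cat. Qed.

Lemma act_rcons a k s : act (rcons a k) s = swap_at (act a s) k.
Proof. by rewrite /act foldl_rcons. Qed.

Definition valid (n : nat) (a : seq nat) := all (fun k => (0 < k) && (k < n)) a.

Lemma size_act a s : size (act a s) = size s.
Proof. elim: a s => [|k a IH] s //=; by rewrite IH size_swap. Qed.

Lemma perm_act a s : valid (size s) a -> perm_eq (act a s) s.
Proof.
elim: a s => [|k a IH] s //= /andP[hk ha].
have hs := size_swap s k.
apply: perm_trans (IH _ _) (perm_swap hk); by rewrite hs.
Qed.

Lemma ninv_act a s : uniq s -> valid (size s) a ->
  ninv (act a s) <= ninv s + size a /\
  (ninv (act a s) = ninv s + size a -> forall j, j < size a ->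
     let t := act (take j a) s in nth 0 t (nth 0 a j).-1 < nth 0 t (nth 0 a j)).
Proof.
elim: a s => [|k a IH] s us /=; first by split; [lia| ].
move=> /andP[hk ha].
have us' : uniq (swap_at s k) by rewrite (perm_uniq (perm_swap hk)).
have hv : valid (size (swap_at s k)) a by rewrite size_swap.
have [IH1 IH2] := IH (swap_at s k) us' hv.
have hsw := ninv_swap hk.
have hne : nth 0 s k.-1 != nth 0 s k.
  have /andP[k0 ks] := hk; rewrite nth_uniq //; [apply/eqP; lia|exact: leq_ltn_trans (leq_pred k) ks].
split.
  move: hne; case: (ltngtP (nth 0 s k.-1) (nth 0 s k)) => h //= _; lia.
move=> heq [|j] hj /=.
  move: hne; case: (ltngtP (nth 0 s k.-1) (nth 0 s k)) => h //= _; lia.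
apply: IH2 => //.
move: hne; case: (ltngtP (nth 0 s k.-1) (nth 0 s k)) => h //= _; lia.
Qed.

Definition before (s : seq nat) u v := index u s < index v s.

Lemma eq_nth_index (s : seq nat) u j : uniq s -> u \in s -> j < size s ->
  (u == nth 0 s j) = (index u s == j).
Proof.
move=> us us' hj; apply/eqP/eqP => [->|<-]; first exact: index_uniq.
by rewrite nth_index.
Qed.

Lemma index_swap (s : seq nat) k u : uniq s -> 0 < k < size s -> u \in s ->
  index u (swap_at s k) = if u == nth 0 s k.-1 then k
        else if u == nth 0 s k then k.-1 else index u s.
Proof.
move=> us hk us'; have /andP[k0 ks] := hk.
have us2 : uniq (swap_at s k) by rewrite (perm_uniq (perm_swap hk)).
have hi := index_mem u s; rewrite us' in hi.
have e1 := eq_nth_index us us' (leq_ltn_trans (leq_pred k) ks).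
have e2 := eq_nth_index us us' ks.
set i := (X in _ = X).
have isz : i < size s.
  rewrite /i; case: ifP => _; first by [].
  case: ifP => _ //; exact: leq_ltn_trans (leq_pred k) ks.
have hn : nth 0 (swap_at s k) i = u.
  move: isz; rewrite /i.
  case: (eqVneq u (nth 0 s k.-1)) => [->|h1] isz.
    rewrite nth_swap //.
    have -> : (k == k.-1) = false by apply/eqP; lia.
    by rewrite eqxx.
  case: (eqVneq u (nth 0 s k)) => [e|h2].
    by rewrite nth_swap ?eqxx ?e // (leq_ltn_trans (leq_pred k) ks).
  rewrite nth_swap //.
  have n1 : index u s != k.-1 by rewrite -e1.
  have n2 : index u s != k by rewrite -e2.
  rewrite (negbTE n1) (negbTE n2); exact: nth_index.
rewrite -{1}hn index_uniq //; by rewrite size_swap.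
Qed.

Lemma step_bef (s : seq nat) k u v : uniq s -> 0 < k < size s ->
  nth 0 s k.-1 < nth 0 s k -> u \in s -> v \in s -> v < u ->
  before (swap_at s k) u v =
    before s u v || ((u == nth 0 s k) && (v == nth 0 s k.-1)).
Proof.
move=> us hk hlt hu hv vu; have /andP[k0 ks] := hk.
rewrite /before !index_swap //.
have eu1 := eq_nth_index us hu (leq_ltn_trans (leq_pred k) ks).
have eu2 := eq_nth_index us hu ks.
have ev1 := eq_nth_index us hv (leq_ltn_trans (leq_pred k) ks).
have ev2 := eq_nth_index us hv ks.
have hiu := index_mem u s; have hiv := index_mem v s.
have huv : index u s != index v s.
  apply/negP => /eqP h; have := nth_index 0 hu; rewrite h nth_index //; lia.
case: (eqVneq u (nth 0 s k.-1)) eu1 => [e|ne] eu1;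
case: (eqVneq u (nth 0 s k)) eu2 => [e'|ne'] eu2;
case: (eqVneq v (nth 0 s k.-1)) ev1 => [f|nf] ev1;
case: (eqVneq v (nth 0 s k)) ev2 => [f'|nf'] ev2 /=;
  try (subst; lia).
all: move/eqP: eu1 => eu1; move/eqP: eu2 => eu2; move/eqP: ev1 => ev1; move/eqP: ev2 => ev2.
all: lia.
Qed.

Definition red n (s : seq nat) (a : seq nat) :=
  [&& valid n a, size a == ninv s & act a (idword n) == s].

Definition st n a j := act (take j a) (idword n).

Lemma index_idword n u : u \in idword n -> index u (idword n) = u.-1.
Proof.
rewrite /idword mem_iota => hu.
have -> : u = nth 0 (iota 1 n) u.-1 by rewrite nth_iota; lia.
rewrite index_uniq ?iota_uniq ?size_iota; rewrite ?nth_iota; lia.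
Qed.

Lemma red_valid n s a : red n s a -> valid n a.
Proof. by case/and3P. Qed.

Lemma red_act n s a : red n s a -> act a (idword n) = s.
Proof. by case/and3P => _ _ /eqP. Qed.

Lemma red_size n s a : red n s a -> size a = ninv s.
Proof. by case/and3P => _ /eqP. Qed.

Lemma letter n a j : valid n a -> j < size a -> 0 < nth 0 a j < n.
Proof. by move=> /all_nthP h hj; exact: h. Qed.

Lemma valid_take n a j : valid n a -> valid n (take j a).
Proof. by move=> h; rewrite /valid -(cat_take_drop j a) all_cat in h; case/andP: h. Qed.

Lemma st_perm n a j : valid n a -> perm_eq (st n a j) (idword n).
Proof.
move=> h; apply: perm_act; rewrite /idword size_iota; exact: valid_take.
Qed.

Lemma st_uniq n a j : valid n a -> uniq (st n a j).
Proof. by move=> h; rewrite (perm_uniq (st_perm j h)) iota_uniq. Qed.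

Lemma st_mem n a j u : valid n a -> (u \in st n a j) = (u \in idword n).
Proof. by move=> h; rewrite (perm_mem (st_perm j h)). Qed.

Lemma st_size n a j : size (st n a j) = n.
Proof. by rewrite /st size_act size_iota. Qed.

Lemma st_succ n a j : j < size a -> st n a j.+1 = swap_at (st n a j) (nth 0 a j).
Proof. by move=> hj; rewrite /st (take_nth 0 hj) act_rcons. Qed.

Lemma st_end n s a : red n s a -> st n a (size a) = s.
Proof. by move=> h; rewrite /st take_size (red_act h). Qed.

Lemma st_0 n a : st n a 0 = idword n.
Proof. by rewrite /st take0. Qed.

Lemma inc n s a j : red n s a -> j < size a ->
  nth 0 (st n a j) (nth 0 a j).-1 < nth 0 (st n a j) (nth 0 a j).
Proof.
move=> h hj.
have us : uniq (idword n) by exact: iota_uniq.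
have hv : valid (size (idword n)) a by rewrite /idword size_iota; exact: red_valid h.
have [_ H] := ninv_act us hv.
apply: H => //.
by rewrite (red_act h) (red_size h) /idword [ninv (iota _ _)]ninvE ninv2_iota.
Qed.

Lemma step n s a j u v : red n s a -> j < size a ->
  u \in idword n -> v \in idword n -> v < u ->
  before (st n a j.+1) u v = before (st n a j) u v ||
    ((u == nth 0 (st n a j) (nth 0 a j)) && (v == nth 0 (st n a j) (nth 0 a j).-1)).
Proof.
move=> h hj hu hv vu; have hva := red_valid h.
rewrite st_succ //; apply: step_bef => //; rewrite ?st_mem //.
- exact: st_uniq.
- by rewrite st_size; exact: letter.
- exact: inc h hj.
Qed.

Lemma bef0 n a u v : u \in idword n -> v \in idword n -> v < u ->
  before (st n a 0) u v = false.
Proof.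
move=> hu hv vu; rewrite st_0 /before !index_idword //.
move: hu hv; rewrite /idword !mem_iota => hu hv; apply/negbTE; lia.
Qed.

Lemma PC n s a u v i : red n s a -> u \in idword n -> v \in idword n -> v < u ->
  i <= size a -> before (st n a i) u v = (Pidx n a u v <= i).
Proof.
move=> h hu hv vu; rewrite /Pidx.
set c := find _ _.
elim: i => [|i IH] hi; first by rewrite bef0.
rewrite (@step n s a i u v h hi hu hv vu).
rewrite IH; last lia.
have hcr : creates n a u v i = (c == i) || ((c < i) && creates n a u v i).
  case: (ltngtP c i) => hci //=.
  - have := before_find 0 hci; rewrite nth_iota; last lia.
    by rewrite add0n => ->.
  - have : has (creates n a u v) (iota 0 (size a)).
      by rewrite has_find -/c size_iota; lia.
    move/(nth_find 0); rewrite -/c hci nth_iota ?add0n // size_iota; lia.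
rewrite [_ && _](_ : _ = creates n a u v i); last first.
  by rewrite /creates andbC (eq_sym u) (eq_sym v).
rewrite hcr.
case: (ltngtP c i) => hci /=; lia.
Qed.

Lemma Pidx_le n a u v : Pidx n a u v <= (size a).+1.
Proof. by rewrite /Pidx ltnS -{2}(size_iota 0 (size a)) find_size. Qed.

Lemma Pidx_cr n a u v : Pidx n a u v <= size a -> creates n a u v (Pidx n a u v).-1.
Proof.
rewrite /Pidx /= => h.
have hh : has (creates n a u v) (iota 0 (size a)) by rewrite has_find size_iota.
by have := nth_find 0 hh; rewrite nth_iota ?add0n // -ltnS.
Qed.

Lemma P_inv n s a u v : red n s a -> u \in idword n -> v \in idword n -> v < u ->
  (Pidx n a u v <= size a) = before s u v.
Proof. by move=> h hu hv vu; rewrite -(PC h hu hv vu (leqnn _)) (st_end h). Qed.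

Lemma idx_nth (t : seq nat) i : uniq t -> i < size t -> index (nth 0 t i) t = i.
Proof. by move=> ut hi; rewrite index_uniq. Qed.

Lemma TL n s a x y z : red n s a -> x \in idword n -> y \in idword n -> z \in idword n ->
  x < y -> y < z -> before s z x ->
  if Pidx n a z y < Pidx n a y x then
    Pidx n a z y < Pidx n a z x < Pidx n a y x
  else Pidx n a y x < Pidx n a z x < Pidx n a z y.
Proof.
move=> h hx hy hz xy yz bzx.
have hva := red_valid h.
have zx : x < z by lia.
have hP := P_inv h hz hx zx; rewrite bzx in hP.
set c := (Pidx n a z x).-1.
have p1 : 0 < Pidx n a z x by [].
have hc : c < size a by rewrite /c; lia.
have hcr := Pidx_cr hP; rewrite -/c /creates -/(st n a c) in hcr.
set t := st n a c in hcr.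
set k := nth 0 a c in hcr.
case/andP: hcr => /eqP ex /eqP ez.
have /andP[k0 kn] := letter hva hc.
have ut : uniq t := st_uniq c hva.
have szt : size t = n := st_size n a c.
have yt : y \in t by rewrite st_mem.
have iyk1 : index y t != k.-1.
  apply/negP => /eqP e; have := nth_index 0 yt; rewrite e ex; lia.
have iyk : index y t != k.
  apply/negP => /eqP e; have := nth_index 0 yt; rewrite e ez; lia.
have ix : index x t = k.-1 by rewrite -ex idx_nth //; lia.
have iz : index z t = k by rewrite -ez idx_nth //; lia.
have hzy := PC h hz hy yz (ltnW hc).
have hyx := PC h hy hx xy (ltnW hc).
have hzy1 := PC h hz hy yz hc.
have hyx1 := PC h hy hx xy hc.
rewrite (@step n s a c z y h hc hz hy yz) -/t -/k -/(st n a c) in hzy1.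
rewrite (@step n s a c y x h hc hy hx xy) -/t -/k -/(st n a c) in hyx1.
rewrite -/t /before ix iz in hzy hyx hzy1 hyx1.
rewrite ez ex in hzy1 hyx1.
have yx : (y == x) = false by apply/eqP; lia.
have yz' : (y == z) = false by apply/eqP; lia.
rewrite yx yz' eqxx /= orbF in hzy1 hyx1.
have Pzx : Pidx n a z x = c.+1 by rewrite /c; lia.
rewrite Pzx.
case: (ltnP (index y t) k.-1) => hl.
- have e1 : Pidx n a y x <= c by rewrite -hyx.
  have e2 : ~~ (Pidx n a z y <= c) by rewrite -hzy; lia.
  have e3 : ~~ (Pidx n a z y <= c.+1) by rewrite -hzy1; lia.
  case: ifP; lia.
- have e1 : ~~ (Pidx n a y x <= c.+1) by rewrite -hyx1; lia.
  have e2 : (Pidx n a z y <= c) by rewrite -hzy; lia.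
  case: ifP; lia.
Qed.

Definition inTs (s : seq nat) (x y z : nat) : bool :=
  [&& x < y, y < z, x \in s, y \in s, z \in s,
      index z s < index y s & index y s < index x s].

Definition GA n s a b := forall x y z, inTs s x y z -> Gamma n a x y z = Gamma n b x y z.

Lemma red_mem n s a u : red n s a -> (u \in s) = (u \in idword n).
Proof. by move=> h; rewrite -(st_end h) st_mem // (red_valid h). Qed.

Lemma GE n s a b x y z : red n s a -> red n s b -> GA n s a b ->
  x \in idword n -> y \in idword n -> z \in idword n ->
  x < y -> y < z -> before s z x ->
  (Pidx n a z y < Pidx n a y x) = (Pidx n b z y < Pidx n b y x).
Proof.
move=> ha hb hg hx hy hz xy yz bzx.
have sab : size a = size b by rewrite (red_size ha) (red_size hb).
have la1 := Pidx_le n a z y; have la2 := Pidx_le n a y x.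
have lb1 := Pidx_le n b z y; have lb2 := Pidx_le n b y x.
have pa1 := P_inv ha hz hy yz; have pa2 := P_inv ha hy hx xy.
have pb1 := P_inv hb hz hy yz; have pb2 := P_inv hb hy hx xy.
case bzy: (before s z y) in pa1 pb1; case byx: (before s y x) in pa2 pb2.
- have := hg x y z; rewrite /inTs xy yz !(red_mem _ ha) hx hy hz.
  rewrite /before in bzy byx; rewrite bzy byx /Gamma => /(_ isT).
  by case: (_ < _); case: (_ < _).
- apply/idP/idP; lia.
- apply/idP/idP; lia.
- apply/idP/idP; lia.
Qed.

Lemma TT n s a b x y z : red n s a -> red n s b -> GA n s a b ->
  x \in idword n -> y \in idword n -> z \in idword n ->
  x < y -> y < z -> before s z x ->
  (Pidx n a z y < Pidx n a z x < Pidx n a y x /\ Pidx n b z y < Pidx n b z x < Pidx n b y x) \/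
  (Pidx n a y x < Pidx n a z x < Pidx n a z y /\ Pidx n b y x < Pidx n b z x < Pidx n b z y).
Proof.
move=> ha hb hg hx hy hz xy yz bzx.
have := TL ha hx hy hz xy yz bzx; have := TL hb hx hy hz xy yz bzx.
rewrite (GE ha hb hg hx hy hz xy yz bzx).
case: ifP => _ h1 h2; [left|right]; split; lia.
Qed.

Lemma SV n s a b e1 e2 p q : red n s a -> red n s b -> GA n s a b ->
  e1 \in idword n -> e2 \in idword n -> p \in idword n -> q \in idword n ->
  e2 < e1 -> q < p -> before s e1 e2 -> before s p q ->
  (e1 != p) || (e2 != q) ->
  [|| e1 == p, e1 == q, e2 == p | e2 == q] ->
  Pidx n a e1 e2 < Pidx n a p q -> Pidx n b p q < Pidx n b e1 e2 -> False.
Proof.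
move=> ha hb hg h1 h2 hp hq e21 qp be bf hne hsh l1 l2.
have TT' := TT ha hb hg.
case/or4P: hsh => /eqP E; subst.
- rewrite eqxx /= in hne.
  case: (ltngtP e2 q) => c.
  + have := TT' _ _ _ h2 hq hp c qp be; lia.
  + have := TT' _ _ _ hq h2 hp c e21 bf; lia.
  + by rewrite c eqxx in hne.
- have bt : before s p e2 by rewrite /before in be bf *; lia.
  have := TT' _ _ _ h2 hq hp e21 qp bt; lia.
- have bt : before s e1 q by rewrite /before in be bf *; lia.
  have := TT' _ _ _ hq hp h1 qp e21 bt; lia.
- rewrite eqxx orbF in hne.
  case: (ltngtP e1 p) => c.
  + have := TT' _ _ _ hq h1 hp e21 c bf; lia.
  + have := TT' _ _ _ hq hp h1 qp c be; lia.
  + by rewrite c eqxx in hne.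
Qed.


Definition far (c d : nat) := (c.+1 < d) || (d.+1 < c).

Lemma swap_comm t i j : 0 < i < size t -> 0 < j < size t -> far i j ->
  swap_at (swap_at t i) j = swap_at (swap_at t j) i.
Proof.
move=> /andP[i0 it] /andP[j0 jt] f; rewrite /far in f.
apply: (@eq_from_nth _ 0); first by rewrite !size_swap.
move=> p; rewrite !size_swap => hp.
rewrite !nth_swap ?size_swap //; try lia.
repeat case: eqP => //= ?; try lia.
Qed.

Lemma act_cons2 i j w t : act (i :: j :: w) t = act w (swap_at (swap_at t i) j).
Proof. by []. Qed.

Lemma valid_cat n a b : valid n (a ++ b) = valid n a && valid n b.
Proof. by rewrite /valid all_cat. Qed.

Lemma red_comm n s u v i j : far i j ->
  red n s (u ++ [:: i; j] ++ v) -> red n s (u ++ [:: j; i] ++ v).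
Proof.
move=> f /and3P[hv hs ha]; rewrite /red.
move: hv; rewrite !valid_cat /valid /= => /and3P[-> /and3P[hi hj _] ->].
rewrite hi hj /=; apply/andP; split.
  by move: hs; rewrite !size_cat.
move: ha; rewrite !act_cat !act_cons2 swap_comm //; rewrite size_act /idword size_iota //.
Qed.

Lemma st_comm n u v i j r : far i j -> valid n (u ++ [:: i; j] ++ v) ->
  r != (size u).+1 ->
  st n (u ++ [:: i; j] ++ v) r = st n (u ++ [:: j; i] ++ v) r.
Proof.
move=> f hv hr; rewrite /st !take_cat.
case: ifP => // hr1.
have [->|hr2] := eqVneq r (size u); first by rewrite subnn.
have -> : r - size u = (r - size u - 2).+2 by lia.
rewrite /= !act_cat !act_cons2 swap_comm //.
  move: hv; rewrite !valid_cat /valid /= => /and3P[_ /and3P[hi hj _] _].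
  by rewrite size_act /idword size_iota.
move: hv; rewrite !valid_cat /valid /= => /and3P[_ /and3P[hi hj _] _].
by rewrite size_act /idword size_iota.
Qed.

Definition Wit n a x y z :=
  exists r, r <= size a /\ before (st n a r) z y /\ ~~ before (st n a r) y x.

Lemma Gamma_wit n s a x y z : red n s a -> x \in idword n -> y \in idword n -> z \in idword n ->
  x < y -> y < z -> (Pidx n a z y < Pidx n a y x) <-> Wit n a x y z.
Proof.
move=> h hx hy hz xy yz; have l := Pidx_le n a y x; split.
  move=> lt; exists (Pidx n a z y); split; first lia.
  by rewrite !(PC h) //; lia.
case=> r [hr [b1 b2]]; rewrite !(PC h) // in b1 b2; lia.
Qed.

Lemma WT n s u v i j x y z : far i j ->
  red n s (u ++ [:: i; j] ++ v) -> red n s (u ++ [:: j; i] ++ v) ->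
  x \in idword n -> y \in idword n -> z \in idword n -> x < y -> y < z ->
  Wit n (u ++ [:: i; j] ++ v) x y z -> Wit n (u ++ [:: j; i] ++ v) x y z.
Proof.
set a := u ++ _; set b := u ++ _ => f ha hb hx hy hz xy yz [r [hr [b1 b2]]].
have hva := red_valid ha.
have sab : size a = size b by rewrite /a /b !size_cat.
have sa : size a = size u + 2 + size v by rewrite /a !size_cat /= addnA addn2.

have [er|nr] := eqVneq r (size u).+1; last first.
  by exists r; rewrite -sab -st_comm.
subst r.
have hh : size u < size a by clear -sa; lia.
have ai : nth 0 a (size u) = i by rewrite /a nth_cat ltnn subnn.
have aj : nth 0 a (size u).+1 = j.
  by rewrite /a nth_cat ltnNge leqnSn /= subSn // subnn.
have s1 := @step n s a (size u) z y ha hh hz hy yz.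
have s2 := @step n s a (size u) y x ha hh hy hx xy.
rewrite ai in s1 s2.
case bt: (before (st n a (size u)) z y) in s1.
  exists (size u); split; first by clear -sab sa; lia.
  rewrite -/b -st_comm //; last by apply/eqP; clear; lia.
  split => //; apply: contra b2; by rewrite s2 => ->.
have b1c := b1; move: b1c; rewrite s1 /= => /andP[/eqP ez /eqP ey].
exists (size u).+2; split; first by clear -sab sa; lia.
rewrite -/b -st_comm //; last by rewrite eqSS neq_ltn ltnSn orbT.
have hh1 : (size u).+1 < size a by clear -sa; lia.
have s3 := @step n s a (size u).+1 z y ha hh1 hz hy yz.
have s4 := @step n s a (size u).+1 y x ha hh1 hy hx xy.
rewrite s3 b1 /=; split => //.
rewrite s4 (negbTE b2) /= aj.
have /andP[i0 iN] := letter hva hh.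
have /andP[j0 jN] := letter hva hh1.
rewrite ai aj in i0 iN j0 jN.
rewrite st_succ // ai nth_swap; last by rewrite st_size.
have -> : (j == i.-1) = false by apply/eqP; rewrite /far in f; clear -f i0 j0; lia.
have -> : (j == i) = false by apply/eqP; rewrite /far in f; clear -f i0 j0; lia.
apply/negP => /andP[/eqP e _].
have ut := st_uniq (size u) hva.
move: ey; rewrite e => /eqP; rewrite nth_uniq ?st_size //; rewrite /far in f; clear -f i0 j0 iN jN; lia.
Qed.


Lemma FW n s a b : comm_step a b -> red n s a -> red n s b /\ GA n s a b.
Proof.
case=> u [v [i [j [f [-> ->]]]]] ha.
have hb := red_comm f ha; split => // x y z hT.
have /and5P[xy yz hx' hy' /andP[hz' _]] := hT.
rewrite !(red_mem _ ha) in hx' hy' hz'.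
rewrite /Gamma; congr nat_of_bool; apply/idP/idP.
  move/(Gamma_wit ha hx' hy' hz' xy yz) => W.
  apply/(Gamma_wit hb hx' hy' hz' xy yz); exact: WT f ha hb hx' hy' hz' xy yz W.
move/(Gamma_wit hb hx' hy' hz' xy yz) => W.
have f' : far j i by rewrite /far orbC.
apply/(Gamma_wit ha hx' hy' hz' xy yz); exact: WT f' hb ha hx' hy' hz' xy yz W.
Qed.

Lemma cc_fw n s a b : same_comm_class a b -> red n s a -> red n s b /\ GA n s a b.
Proof.
elim=> {a b} [a b hab|a|a b c _ IH1 _ IH2] ha.
- exact: FW.
- by split => // x y z.
- have [hb g1] := IH1 ha; have [hc g2] := IH2 hb; split => // x y z hT.
  by rewrite g1 // g2.
Qed.

Lemma comm_sym a b : comm_step a b -> comm_step b a.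
Proof.
case=> u [v [i [j [f [-> ->]]]]]; exists u, v, j, i; split => //; by rewrite orbC.
Qed.

Lemma cc_sym a b : same_comm_class a b -> same_comm_class b a.
Proof.
elim=> {a b} [a b hab|a|a b c _ IH1 _ IH2].
- by apply: rt_step; apply: comm_sym.
- exact: rt_refl.
- exact: rt_trans IH2 IH1.
Qed.

Lemma cc_app pre suf a b : same_comm_class a b ->
  same_comm_class (pre ++ a ++ suf) (pre ++ b ++ suf).
Proof.
elim=> {a b} [a b hab|a|a b c _ IH1 _ IH2].
- apply: rt_step; case: hab => u [v [i [j [f [-> ->]]]]].
  exists (pre ++ u), (v ++ suf), i, j; split => //; by rewrite !catA.
- exact: rt_refl.
- exact: rt_trans IH1 IH2.
Qed.

Lemma move_end c b2 pre : all (far c) b2 ->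
  same_comm_class (pre ++ c :: b2) (pre ++ b2 ++ [:: c]).
Proof.
elim: b2 pre => [|d b2 IH] pre /=; first by move=> _; apply: rt_refl.
move=> /andP[f hall].
apply: rt_trans (_ : same_comm_class _ ((pre ++ [:: d]) ++ c :: b2)) _.
  apply: rt_step; exists pre, b2, c, d; split => //; by rewrite -catA.
by have := IH (pre ++ [:: d]) hall; rewrite -!catA.
Qed.

Lemma swap_invol t k : 0 < k < size t -> swap_at (swap_at t k) k = t.
Proof.
move=> /andP[k0 kt]; apply: (@eq_from_nth _ 0); first by rewrite !size_swap.
move=> p; rewrite !size_swap => hp.
rewrite !nth_swap ?size_swap //; try (clear -k0 kt; lia).
repeat case: eqP => //= ?; try (clear -k0 kt hp; lia).
all: congr nth; lia.
Qed.

Lemma st_rcons n a0 k i : i <= size a0 -> st n (rcons a0 k) i = st n a0 i.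
Proof. by move=> hi; rewrite /st -cats1 takel_cat. Qed.

Lemma PF n s s0 a0 k u v : red n s (rcons a0 k) -> red n s0 a0 ->
  u \in idword n -> v \in idword n -> v < u -> before s0 u v ->
  Pidx n (rcons a0 k) u v = Pidx n a0 u v.
Proof.
move=> ha h0 hu hv vu b0.
have le0 := P_inv h0 hu hv vu; rewrite b0 in le0.
have E : forall i, i <= size a0 ->
    (Pidx n (rcons a0 k) u v <= i) = (Pidx n a0 u v <= i).
  move=> i hi; rewrite -(PC ha hu hv vu) ?size_rcons ?(leq_trans hi) //.
  by rewrite st_rcons // (PC h0).
have e1 := E _ le0; rewrite leqnn in e1.
have p1 : 0 < Pidx n a0 u v by [].
have e2 := E (Pidx n a0 u v).-1 (leq_trans (leq_pred _) le0).
have : ~~ (Pidx n a0 u v <= (Pidx n a0 u v).-1) by clear -p1; lia.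
rewrite -e2; clear -e1 p1; lia.
Qed.

Lemma GPF n s s0 a0 k x y z : red n s (rcons a0 k) -> red n s0 a0 ->
  inTs s0 x y z -> Gamma n (rcons a0 k) x y z = Gamma n a0 x y z.
Proof.
move=> ha h0 /and5P[xy yz hx hy /and3P[hz b1 b2]].
rewrite !(red_mem _ h0) in hx hy hz.
by rewrite /Gamma (PF ha h0) // (PF ha h0).
Qed.

Lemma INT n s a l x y z : red n s a -> l < size a ->
  inTs (st n a l) x y z -> inTs (st n a l.+1) x y z.
Proof.
move=> ha hl /and5P[xy yz hx hy /and3P[hz b1 b2]].
have hva := red_valid ha.
rewrite !st_mem // in hx hy hz.
rewrite /inTs !st_mem // xy yz hx hy hz /=.
have s1 := @step n s a l z y ha hl hz hy yz.
have s2 := @step n s a l y x ha hl hy hx xy.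
rewrite /before in s1 s2; rewrite s1 s2 b1 b2.
done.
Qed.

Lemma nth_mem_id n a j i : valid n a -> i < n -> nth 0 (st n a j) i \in idword n.
Proof. by move=> h hi; rewrite -(st_mem j _ h) mem_nth // st_size. Qed.

Lemma BW n l : forall s a b, size a = l -> red n s a -> red n s b -> GA n s a b ->
  same_comm_class a b.
Proof.
elim: l => [|l IH] s a b hl ha hb hg.
  have eb : b = [::] by apply/size0nil; rewrite (red_size hb) -(red_size ha).
  have ea : a = [::] by apply/size0nil.
  by rewrite ea eb; apply: rt_refl.
case/lastP: a hl ha hg => [//|a' k] hl ha hg.
rewrite size_rcons in hl; case: hl => hl.
have hva := red_valid ha; have hvb := red_valid hb.
have sa : size (rcons a' k) = l.+1 by rewrite size_rcons hl.
have sb : size b = l.+1 by rewrite (red_size hb) -(red_size ha).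
have hl' : l < size (rcons a' k) by rewrite sa.
have ak : nth 0 (rcons a' k) l = k by rewrite nth_rcons hl ltnn eqxx.
set t' := st n (rcons a' k) l.
have et' : t' = act a' (idword n) by rewrite /t' /st -cats1 -hl take_size_cat.
have es : s = swap_at t' k by rewrite -(st_end ha) sa st_succ // ak.
have /andP[k0 kn] := letter hva hl'; rewrite ak in k0 kn.
set p := nth 0 t' k; set q := nth 0 t' k.-1.
have qp : q < p by have := inc ha hl'; rewrite ak.
have ut : uniq t' := st_uniq l hva.
have szt : size t' = n := st_size n _ l.
have hp : p \in idword n by apply: nth_mem_id.
have hq : q \in idword n by apply: (nth_mem_id _ hva); clear -kn; lia.
have Pa : Pidx n (rcons a' k) p q = l.+1.
  have e0 := PC ha hp hq qp (ltnW hl').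
  have e1 := PC ha hp hq qp hl'.
  rewrite (@step n s _ l p q ha hl' hp hq qp) ak -/t' -/p -/q !eqxx orbT in e1.
  rewrite -/t' /before /p /q !idx_nth ?szt // in e0; try (clear -k0 kn; lia).
  rewrite -/t' /before /p /q in e0.
  have h0 : (k < k.-1) = false by clear; lia.
  rewrite h0 in e0; apply/eqP; rewrite eqn_leq -e1 andTb ltnNge -e0 //.
have bpq : before s p q.
  have := P_inv ha hp hq qp. rewrite Pa sa leqnn. by [].
have Pb : Pidx n b p q <= l.+1.
  have := P_inv hb hp hq qp; rewrite bpq sb; by [].
set m := (Pidx n b p q).-1.
have pb1 : 0 < Pidx n b p q by [].
have hm : m < size b by rewrite sb /m; clear -Pb pb1; lia.
have crb := @Pidx_cr n b p q; rewrite sb in crb.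
move: {crb}(crb Pb); rewrite -/m /creates -/(st n b m).
set c := nth 0 b m => /andP[/eqP cq /eqP cp].
have /andP[c0 cn] := letter hvb hm; rewrite -/c in c0 cn.
have AV : forall j, m < j -> j < l.+1 ->
    [/\ nth 0 (st n b j) (nth 0 b j) != p, nth 0 (st n b j) (nth 0 b j) != q,
        nth 0 (st n b j) (nth 0 b j).-1 != p & nth 0 (st n b j) (nth 0 b j).-1 != q].
  move=> j mj jL.
  have hj : j < size b by rewrite sb.
  have /andP[d0 dn] := letter hvb hj.
  set tt := st n b j; set d := nth 0 b j in d0 dn *.
  set e1 := nth 0 tt d; set e2 := nth 0 tt d.-1.
  have e21 : e2 < e1 by exact: inc hb hj.
  have he1 : e1 \in idword n by apply: nth_mem_id.
  have he2 : e2 \in idword n by apply: (nth_mem_id _ hvb); clear -dn; lia.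
  have utt : uniq tt := st_uniq j hvb.
  have Pbe : Pidx n b e1 e2 = j.+1.
    have f0 := PC hb he1 he2 e21 (ltnW hj).
    have f1 := PC hb he1 he2 e21 hj.
    rewrite (@step n s _ j e1 e2 hb hj he1 he2 e21) -/tt -/d -/e1 -/e2 !eqxx orbT in f1.
    rewrite -/tt /before /e1 /e2 !idx_nth ?st_size // in f0; try (clear -d0 dn; lia).
    have h0 : (d < d.-1) = false by clear; lia.
    rewrite h0 in f0; apply/eqP; rewrite eqn_leq -f1 andTb ltnNge -f0 //.
  have be : before s e1 e2.
    have := P_inv hb he1 he2 e21; rewrite Pbe sb jL; by [].
  have le := P_inv ha he1 he2 e21; rewrite be sa in le.
  have Pae : Pidx n (rcons a' k) e1 e2 < l.+1.
    suff : Pidx n (rcons a' k) e1 e2 != l.+1 by clear -le; lia.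
    apply/eqP => E; have := @Pidx_cr n (rcons a' k) e1 e2.
    rewrite sa E ltnSn => /(_ isT) /=; rewrite /creates ak -/(st n _ l) -/t' -/p -/q.
    case/andP => /eqP E2 /eqP E1.
    move: Pbe; rewrite -E1 -E2 => Pbe.
    by move: mj; rewrite /m Pbe /= ltnn.
  have hne : (e1 != p) || (e2 != q).
    rewrite -negb_and; apply/negP => /andP[/eqP E1 /eqP E2].
    by move: mj; rewrite /m -E1 -E2 Pbe /= ltnn.
  have NS : ~~ [|| e1 == p, e1 == q, e2 == p | e2 == q].
    apply/negP => sh; apply: (SV ha hb hg he1 he2 hp hq e21 qp be bpq hne sh).
      by rewrite Pa.
    rewrite Pbe; clear -mj pb1; rewrite /m in mj; lia.
  by move: NS; rewrite !negb_or => /and4P[-> -> -> ->].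
have POS : forall dd, m + dd < l.+1 ->
    nth 0 (st n b (m + dd).+1) c.-1 = p /\ nth 0 (st n b (m + dd).+1) c = q.
  elim=> [|dd IHd] hdd.
    rewrite addn0 st_succ // -/c !nth_swap ?st_size; try (clear -c0 cn; lia).
    rewrite eqxx cp; split => //.
    have -> : (c == c.-1) = false by apply/eqP; clear -c0; lia.
    by rewrite eqxx cq.
  have hdd' : m + dd < l.+1 by rewrite addnS in hdd; clear -hdd; lia.
  have [P1 P2] := IHd hdd'.
  set j := (m + dd).+1.
  have hj : j < size b by rewrite sb /j -addnS.
  have mj : m < j by rewrite /j; clear; lia.
  have jL : j < l.+1 by rewrite /j -addnS.
  have [A1 A2 A3 A4] := AV j mj jL.
  have /andP[d0 dn] := letter hvb hj.
  rewrite addnS -/j st_succ //.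
  set d := nth 0 b j in A1 A2 A3 A4 d0 dn *.
  have n1 : c.-1 != d.-1 by apply/eqP => E; move: A3; rewrite -E P1 eqxx.
  have n2 : c.-1 != d by apply/eqP => E; move: A1; rewrite -E P1 eqxx.
  have n3 : c != d.-1 by apply/eqP => E; move: A4; rewrite -E P2 eqxx.
  have n4 : c != d by apply/eqP => E; move: A2; rewrite -E P2 eqxx.
  rewrite !nth_swap ?st_size; try (clear -c0 cn; lia).
  by rewrite (negbTE n1) (negbTE n2) (negbTE n3) (negbTE n4).
have FARj : forall j, m < j -> j < l.+1 -> far c (nth 0 b j).
  move=> j mj jL.
  have hdd : m + (j - m - 1) < l.+1 by clear -mj jL; lia.
  have [P1 P2] := POS _ hdd.
  have ej : (m + (j - m - 1)).+1 = j by clear -mj; lia.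
  rewrite ej in P1 P2.
  have hj : j < size b by rewrite sb.
  have [A1 A2 A3 A4] := AV j mj jL.
  have /andP[d0 dn] := letter hvb hj.
  set d := nth 0 b j in A1 A2 A3 A4 d0 dn *.
  have n1 : c.-1 != d.-1 by apply/eqP => E; move: A3; rewrite -E P1 eqxx.
  have n2 : c.-1 != d by apply/eqP => E; move: A1; rewrite -E P1 eqxx.
  have n3 : c != d.-1 by apply/eqP => E; move: A4; rewrite -E P2 eqxx.
  have n4 : c != d by apply/eqP => E; move: A2; rewrite -E P2 eqxx.
  rewrite /far; clear -n1 n2 n3 n4 c0 d0; lia.
have us : uniq s by rewrite -(st_end ha); exact: st_uniq.
have szs : size s = n by rewrite -(st_end ha) st_size.
have ck : c = k.
  have hdd : m + (l - m) < l.+1 by clear -hm sb; lia.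
  have [P1 _] := POS _ hdd.
  have el : (m + (l - m)).+1 = size b by rewrite sb; clear -hm sb; lia.
  rewrite el (st_end hb) in P1.
  have P2 : nth 0 s k.-1 = p.
    rewrite es nth_swap ?eqxx // szt; clear -k0 kn; lia.
  have : nth 0 s c.-1 == nth 0 s k.-1 by rewrite P1 P2.
  rewrite nth_uniq ?szs //; try (clear -c0 cn k0 kn; lia).
have hbdec : b = take m b ++ c :: drop m.+1 b.
  by rewrite -{1}(cat_take_drop m b) (drop_nth 0 hm).
have hall : all (far k) (drop m.+1 b).
  apply/(all_nthP 0) => i; rewrite size_drop => hi; rewrite nth_drop -ck.
  apply: FARj; clear -hi sb; lia.
have cc1 : same_comm_class b (take m b ++ drop m.+1 b ++ [:: k]).
  by rewrite {1}hbdec ck; exact: move_end.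
have [hb' gbb'] := cc_fw cc1 hb.
set b1 := take m b in cc1 hb' gbb'; set b2 := drop m.+1 b in cc1 hb' gbb'.
have erc : b1 ++ b2 ++ [:: k] = rcons (b1 ++ b2) k by rewrite -cats1 catA.
rewrite erc in hb' gbb'.
have nv : ninv t' = l.
  have hk : 0 < k < size t' by rewrite szt k0 kn.
  have := ninv_swap hk; rewrite -/p -/q -es -(red_size ha) sa qp.
  have -> : (p < q) = false by apply/negbTE; rewrite -leqNgt ltnW.
  clear; lia.
have ha' : red n t' a'.
  apply/and3P; split.
  - by move: hva; rewrite -cats1 valid_cat => /andP[].
  - by rewrite hl nv.
  - by rewrite et'.
have hb'' : red n t' (b1 ++ b2).
  apply/and3P; split.
  - by move: (red_valid hb'); rewrite -cats1 valid_cat => /andP[].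
  - by move: (red_size hb'); rewrite size_rcons -(red_size ha) sa nv => -[->].
  - have := red_act hb'; rewrite -cats1 act_cat /= es => E.
    have hk : 0 < k < size (act (b1 ++ b2) (idword n)).
      by rewrite size_act /idword size_iota k0 kn.
    rewrite -(swap_invol hk) E swap_invol //; by rewrite szt k0 kn.
have g : GA n t' a' (b1 ++ b2).
  move=> x y z hT.
  have hT' : inTs s x y z.
    by have := INT ha hl' hT; rewrite -sa (st_end ha).
  by rewrite -(GPF ha ha' hT) hg // gbb' // (GPF hb' hb'' hT).
have cc2 := IH t' a' (b1 ++ b2) hl ha' hb'' g.
apply: rt_trans (_ : same_comm_class _ (b1 ++ b2 ++ [:: k])) _.
  by have := cc_app [::] [:: k] cc2; rewrite /= cats1 catA.
exact: cc_sym cc1.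
Qed.

Unset Implicit Arguments.

Theorem mainTheorem3 (n : nat) (w : 'S_n) (a b : seq nat) :
  reduced w a -> reduced w b ->
  (same_comm_class a b <->
   (forall x y z : nat, inT w x y z -> Gamma n a x y z = Gamma n b x y z)).
Proof.
move=> ha hb.
have ha' : red n (oneline w) a by [].
have hb' : red n (oneline w) b by [].
split.
  by move=> cc x y z hT; have [_ g] := cc_fw cc ha'; exact: g.
move=> g; exact: (BW (erefl (size a)) ha' hb' g).
Qed.
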